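(* Let $A,N_1,\dots,N_m\in\mathbb R^{n\times n}$ with $\sigma(A)\subset\mathbb C_-$, and for $x_0\in\mathbb R^n$ and $u=(u_1,\dots,u_m)^T\in L^2$ let $x(t,x_0,0)$, $t\ge0$, denote the solution to $\dot x(t)=Ax(t)+\sum_{k=1}^m N_kx(t)u_k(t)$, $x(0)=x_0$. Then there exist $\gamma,k_1,k_2>0$ such that $$\|x(t,x_0,0)\|_2^2\le\exp\{\gamma^2\|u^0\|_{L^2}^2\}\,\|x_0\|_2^2\,k_1e^{-k_2t}\qquad\text{for all }t\ge0$$ for all $u\in L^2$ (and all $x_0$).
   Context: $\mathbb C_-=\{z\in\mathbb C:\Re z<0\}$ and $\sigma(\cdot)$ denotes the spectrum. $L^2$ is the set of $u:[0,\infty)\to\mathbb R^m$ with $\|u\|_{L^2}^2=\int_0^\infty u^T(s)u(s)\,ds<\infty$. The vector $u^0=(u^0_1,\dots,u^0_m)^T$ is defined by $u^0_k\equiv 0$ if $N_k=0$ and $u^0_k=u_k$ otherwise. *)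

(* Defs.v *)
From HB Require Import structures.
From mathcomp Require Import all_boot all_order all_algebra.
From mathcomp Require Import all_classical all_reals all_analysis.
From mathcomp Require Import complex.
Set Implicit Arguments. Unset Strict Implicit. Unset Printing Implicit Defensive.
Import Order.TTheory GRing.Theory Num.Theory.
Local Open Scope classical_set_scope.
Local Open Scope ring_scope.

Definition spectrum_in_Cminus (R : rcfType) (n : nat) (A : 'M[R]_n) : Prop :=
  forall z : R[i], eigenvalue (map_mx (fun r : R => (r%:C)%C) A) z -> Re z < 0.

Definition sqnorm2 (R : pzRingType) (n : nat) (v : 'cV[R]_n) : R :=
  \sum_(i < n) v i 0 ^+ 2.

Definition L2fun (R : realType) (f : R -> R) : Prop :=
  measurable_fun (`[0%R, +oo[ : set R) f /\
  (\int[lebesgue_measure]_(s in (`[0%R, +oo[ : set R)) ((f s) ^+ 2)%:E < +oo)%E.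

Definition L2input (R : realType) (m : nat) (u : 'I_m -> R -> R) : Prop :=
  forall k, L2fun (u k).

Definition L2sqnorm (R : realType) (f : R -> R) : R :=
  Rintegral lebesgue_measure (`[0%R, +oo[ : set R) (fun s => (f s) ^+ 2).

Definition u0 (R : realType) (n m : nat) (N : 'I_m -> 'M[R]_n)
  (u : 'I_m -> R -> R) : 'I_m -> R -> R :=
  fun k => if N k == 0 then (fun _ => 0) else u k.

(* ||u||_{L^2}^2 = \int_0^oo u^T(s) u(s) ds = sum_k ||u_k||^2. *)
Definition L2sqnorm_vec (R : realType) (m : nat) (u : 'I_m -> R -> R) : R :=
  \sum_(k < m) L2sqnorm (u k).

Definition bilin_rhs (R : realType) (n m : nat) (A : 'M[R]_n)
  (N : 'I_m -> 'M[R]_n) (u : 'I_m -> R -> R) (x : R -> 'cV[R]_n) (s : R)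
  : 'cV[R]_n :=
  A *m x s + \sum_(k < m) (u k s) *: (N k *m x s).

(* x is a (Caratheodory) solution on [0,oo) of
   xdot = A x + sum_k N_k x u_k,  x(0) = x0, i.e. for all t >= 0 and every
   component i the integrand is Lebesgue integrable on [0,t] and
   x(t) = x0 + \int_0^t (A x(s) + sum_k N_k x(s) u_k(s)) ds. *)
Definition is_bilin_solution (R : realType) (n m : nat) (A : 'M[R]_n)
  (N : 'I_m -> 'M[R]_n) (u : 'I_m -> R -> R) (x0 : 'cV[R]_n)
  (x : R -> 'cV[R]_n) : Prop :=
  forall t : R, 0 <= t -> forall i : 'I_n,
    lebesgue_measure.-integrable (`[0%R, t] : set R)
       (fun s => (bilin_rhs A N u x s i 0)%:E) /\
    x t i 0 = x0 i 0 +
      Rintegral lebesgue_measure (`[0%R, t] : set R) (fun s => bilin_rhs A N u x s i 0).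

(* Main.v *)
Require Import Defs.
From HB Require Import structures.
From mathcomp Require Import all_boot all_order all_algebra.
From mathcomp Require Import all_classical all_reals all_analysis.
From mathcomp Require Import complex.
From mathcomp Require Import ring lra.
From mathcomp Require Import measurable_realfun.
Set Implicit Arguments. Unset Strict Implicit. Unset Printing Implicit Defensive.
Import Order.TTheory GRing.Theory Num.Theory.
Import numFieldNormedType.Exports.
Local Open Scope classical_set_scope.
Local Open Scope ring_scope.
Section BF.
Variable R : realType.
Variable n : nat.
Implicit Types (P : 'M[R]_n) (a b c v : 'cV[R]_n).
Definition N1 a := \sum_(i < n) `|a i 0|.
Definition bf P a b := (a^T *m P *m b) 0 0.
Definition pn P := \sum_(i < n) \sum_(j < n) `|P i j|.

Lemma bfE P a b : bf P a b = \sum_(j < n) (\sum_(i < n) a i 0 * P i j) * b j 0.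
Proof. by rewrite /bf mxE; apply: eq_bigr => j _; rewrite !mxE; congr (_ * _); apply: eq_bigr => i _; rewrite mxE. Qed.

Lemma bfDl P a b c : bf P (a + b) c = bf P a c + bf P b c.
Proof. by rewrite /bf linearD /= !mulmxDl mxE. Qed.
Lemma bfDr P a b c : bf P c (a + b) = bf P c a + bf P c b.
Proof. by rewrite /bf !mulmxDr mxE. Qed.
Lemma bfNl P a c : bf P (- a) c = - bf P a c.
Proof. by rewrite /bf linearN /= !mulNmx mxE. Qed.
Lemma bfNr P a c : bf P c (- a) = - bf P c a.
Proof. by rewrite /bf !mulmxN mxE. Qed.
Lemma bfZl P k a c : bf P (k *: a) c = k * bf P a c.
Proof. by rewrite /bf linearZ /= -!scalemxAl mxE. Qed.
Lemma bfZr P k a c : bf P c (k *: a) = k * bf P c a.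
Proof. by rewrite /bf -!scalemxAr mxE. Qed.
Lemma bfC P a b : P^T = P -> bf P a b = bf P b a.
Proof.
move=> sP; rewrite /bf -[in RHS](trmxK (b^T *m P *m a)) [in RHS]mxE.
by rewrite !trmx_mul trmxK sP mulmxA.
Qed.

Lemma N1_ge0 a : 0 <= N1 a.
Proof. by rewrite /N1 sumr_ge0. Qed.
Lemma le_N1 a i : `|a i 0| <= N1 a.
Proof. rewrite /N1 (bigD1 i) //= lerDl sumr_ge0 //. Qed.
Lemma N1D a b : N1 (a + b) <= N1 a + N1 b.
Proof. rewrite /N1 -big_split /= ler_sum // => i _; rewrite mxE ler_normD //. Qed.
Lemma N1N a : N1 (- a) = N1 a.
Proof. by apply: eq_bigr => i _; rewrite mxE normrN. Qed.
Lemma pn_ge0 P : 0 <= pn P.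
Proof. by rewrite /pn sumr_ge0 // => i _; rewrite sumr_ge0. Qed.

Lemma bf_bound P a b : `|bf P a b| <= pn P * N1 a * N1 b.
Proof.
rewrite bfE (le_trans (ler_norm_sum _ _ _)) //.
rewrite /pn exchange_big /= !mulr_suml; apply: ler_sum => j _.
rewrite normrM.
have H1 : `|\sum_(i < n) a i 0 * P i j| <= \sum_(i < n) `|P i j| * N1 a.
  apply: (le_trans (ler_norm_sum _ _ _)); apply: ler_sum => i _.
  by rewrite normrM mulrC ler_wpM2l // le_N1.
apply: le_trans (ler_wpM2r (normr_ge0 _) H1) _.
rewrite -mulr_suml ler_wpM2l //.
by rewrite mulr_ge0 ?N1_ge0 // sumr_ge0.
exact: le_N1.
Qed.
End BF.
Section PT.
Variable R : realType.
Variable n : nat.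
Implicit Types (P : 'M[R]_n) (a b c v : 'cV[R]_n).

Lemma N1B_sym a b : N1 (a - b) = N1 (b - a).
Proof. by rewrite -N1N opprB. Qed.

Lemma pt_bound P a b c v (h psi Psi X : R) : P^T = P ->
  2 * bf P a v <= h * bf P a a -> N1 (c - a) <= Psi -> N1 (a - b) <= Psi ->
  N1 v <= psi -> `|h| <= psi -> N1 a <= X -> N1 b <= X ->
  bf P v (c + b) <= h * bf P b b + psi * (2 * pn P * (1 + X) * Psi).
Proof.
move=> sP H1 Hca Hab Hv Hh Ha Hb.
have e1 : c + b = 2%:R *: a + (c - a) - (a - b).
  by rewrite scaler_nat mulr2n; apply/matrixP => i j; rewrite !mxE; ring.
have e2 : bf P a a = bf P b b + bf P (a - b) (a + b).
  rewrite bfDl bfNl !bfDr (bfC b a sP); ring.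
have Psi0 : 0 <= Psi by apply: le_trans (N1_ge0 _) Hca.
have psi0 : 0 <= psi by apply: le_trans (normr_ge0 _) Hh.
have X0 : 0 <= X by apply: le_trans (N1_ge0 _) Ha.
have p0 := pn_ge0 P.
have B1 : `|bf P (a - b) (a + b)| <= pn P * Psi * (2 * X).
  apply: le_trans (bf_bound _ _ _) _.
  apply: ler_pM; rewrite ?mulr_ge0 ?N1_ge0 ?pn_ge0 //.
    by rewrite ler_wpM2l.
  by apply: le_trans (N1D _ _) _; lra.
have B2 : `|bf P v (c - a)| <= pn P * psi * Psi.
  apply: le_trans (bf_bound _ _ _) _.
  by apply: ler_pM; rewrite ?mulr_ge0 ?N1_ge0 // ler_wpM2l.
have B3 : `|bf P v (a - b)| <= pn P * psi * Psi.
  apply: le_trans (bf_bound _ _ _) _.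
  by apply: ler_pM; rewrite ?mulr_ge0 ?N1_ge0 // ler_wpM2l.
have B4 : h * bf P (a - b) (a + b) <= psi * (pn P * Psi * (2 * X)).
  apply: le_trans (ler_norm _) _; rewrite normrM.
  by apply: ler_pM.
rewrite e1; set d1 := c - a; set d2 := a - b.
rewrite bfDr bfNr bfDr bfZr (bfC v a sP).
move: B2 B3 => /ler_normlP [B2a B2b] /ler_normlP [B3a B3b].
rewrite e2 in H1.
have -> : (2%:R : R) = 2 by [].
nra.
Qed.
End PT.
Section IntFacts.
Variable R : realType.
Notation mu := (@lebesgue_measure R).

Lemma Rint_sum (I : Type) (s : seq I) (itv : interval R) (g : I -> R -> R) :
  (forall i, mu.-integrable [set` itv] (EFin \o g i)) ->
  mu.-integrable [set` itv] (EFin \o (fun x => \sum_(i <- s) g i x)) /\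
  \int[mu]_(x in [set` itv]) (\sum_(i <- s) g i x) = \sum_(i <- s) \int[mu]_(x in [set` itv]) g i x.
Proof.
move=> ig; elim: s => [|i s [IH1 IH2]].
  split.
    have H0 := integrable0 mu [set` itv].
    apply: (eq_integrable _ _ _ _ H0) => // x _ /=; by rewrite big_nil.
  rewrite big_nil; under eq_Rintegral do rewrite big_nil.
  by rewrite Rintegral_cst // mul0r.
split.
  apply: (eq_integrable _ _ _ _ (integrableD _ (ig i) IH1)) => // x _ /=.
  by rewrite big_cons.
under eq_Rintegral do rewrite big_cons.
by rewrite RintegralD // IH2 big_cons.
Qed.

Lemma itv_split (g : R -> R) (a b : R) : 0 <= a -> a <= b ->
  mu.-integrable `[0, b] (EFin \o g) ->
  \int[mu]_(x in `[0, b]) g x - \int[mu]_(x in `[0, a]) g x =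
  \int[mu]_(x in `]a, b]) g x.
Proof.
move=> a0 ab ig.
by rewrite (@Rintegral_itvB _ g (BLeft 0) (BRight b) a) // bnd_simp.
Qed.

Lemma int_sub (g : R -> R) (a b c d : R) : a <= c -> d <= b ->
  mu.-integrable `[a, b] (EFin \o g) -> mu.-integrable `]c, d] (EFin \o g).
Proof.
move=> ac db; apply: integrableS => //.
by apply: subset_itvScc => //; rewrite bnd_simp.
Qed.

Lemma int_subc (g : R -> R) (a b d : R) : d <= b ->
  mu.-integrable `[a, b] (EFin \o g) -> mu.-integrable `[a, d] (EFin \o g).
Proof.
move=> db; apply: integrableS => //.
by apply: subset_itvScc => //; rewrite bnd_simp.
Qed.
End IntFacts.
Section Core.
Variable R : realType.
Notation mu := (@lebesgue_measure R).
Variable n : nat.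
Variable P : 'M[R]_n.
Hypothesis sP : P^T = P.
Hypothesis Ppsd : forall y, 0 <= bf P y y.
Variables (T : R) (x f : R -> 'cV[R]_n) (x0 : 'cV[R]_n) (h : R -> R).
Hypothesis T0 : 0 <= T.
Hypothesis hfi : forall i, mu.-integrable `[0, T] (EFin \o (fun r => f r i 0)).
Hypothesis hhi : mu.-integrable `[0, T] (EFin \o h).
Hypothesis hx : forall t, 0 <= t <= T -> forall i,
  x t i 0 = x0 i 0 + \int[mu]_(s in `[0, t]) f s i 0.
Hypothesis hpt : forall r, 0 <= r <= T ->
  2 * bf P (x r) (f r) <= h r * bf P (x r) (x r).

Definition psi r := \sum_(i < n) `|f r i 0| + `|h r|.
Definition F t := \int[mu]_(s in `[0, t]) psi s.
Definition H t := \int[mu]_(s in `[0, t]) h s.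
Definition q t := bf P (x t) (x t).

Lemma sumf_int : mu.-integrable `[0, T] (EFin \o (fun r => \sum_(i < n) `|f r i 0|)).
Proof.
have := @Rint_sum R _ (index_enum 'I_n) `[0, T] (fun i r => `|f r i 0|).
by case => // i; exact: (integrable_norm (hfi i)).
Qed.

Lemma psi_int : mu.-integrable `[0, T] (EFin \o psi).
Proof. exact: (integrableD _ sumf_int (integrable_norm hhi)). Qed.

Lemma psi_ge0 r : 0 <= psi r.
Proof. by rewrite /psi addr_ge0 // sumr_ge0. Qed.

Lemma F_split a b : 0 <= a -> a <= b -> b <= T ->
  F b - F a = \int[mu]_(s in `]a, b]) psi s.
Proof.
move=> a0 ab bT; rewrite /F itv_split //.
exact: int_subc bT psi_int.
Qed.

Lemma H_split a b : 0 <= a -> a <= b -> b <= T ->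
  H b - H a = \int[mu]_(s in `]a, b]) h s.
Proof.
move=> a0 ab bT; rewrite /H itv_split //.
exact: int_subc bT hhi.
Qed.

Lemma F_mono a b : 0 <= a -> a <= b -> b <= T -> F a <= F b.
Proof.
move=> a0 ab bT; rewrite -subr_ge0 F_split //.
by apply: Rintegral_ge0 => r _; exact: psi_ge0.
Qed.

Lemma F_ge0 t : 0 <= F t.
Proof. by apply: Rintegral_ge0 => r _; exact: psi_ge0. Qed.

Lemma int0 (g : R -> R) : \int[mu]_(s in `[0, 0]) g s = 0.
Proof. by rewrite set_itv1 Rintegral_set1. Qed.

Lemma x0E : x 0 = x0.
Proof.
apply/matrixP => i j; rewrite (ord1 j) hx; last by rewrite lexx T0.
by rewrite int0 addr0.
Qed.

Lemma x_diff s t : 0 <= s -> s <= t -> t <= T -> forall i,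
  x t i 0 - x s i 0 = \int[mu]_(r in `]s, t]) f r i 0.
Proof.
move=> s0 st tT i.
have hs : 0 <= s <= T by rewrite s0 (le_trans st tT).
have ht : 0 <= t <= T by rewrite (le_trans s0 st) tT.
rewrite (hx ht) (hx hs).
have E a b c : a + b - (a + c) = b - c :> R by ring.
rewrite E itv_split //.
exact: int_subc tT (hfi i).
Qed.

Lemma N1_diff s t : 0 <= s -> s <= t -> t <= T -> N1 (x t - x s) <= F t - F s.
Proof.
move=> s0 st tT; rewrite F_split // /N1.
have intsub i : mu.-integrable `]s, t] (EFin \o (fun r => f r i 0)).
  exact: int_sub s0 tT (hfi i).
apply: (@le_trans _ _ (\sum_(i < n) \int[mu]_(r in `]s, t]) `|f r i 0|)).
  apply: ler_sum => i _; rewrite mxE [X in `|x t i 0 + X|]mxE x_diff //.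
  exact: le_normr_Rintegral.
have := @Rint_sum R _ (index_enum 'I_n) `]s, t] (fun i r => `|f r i 0|).
case => [i|I1 <-]; first exact: integrable_norm.
apply: le_Rintegral => //.
  exact: int_sub s0 tT psi_int.
by move=> r _; rewrite /psi lerDl.
Qed.

Lemma N1_x r : 0 <= r -> r <= T -> N1 (x r) <= N1 x0 + F T.
Proof.
move=> r0 rT.
have -> : x r = (x r - x 0) + x0 by rewrite x0E addrNK.
apply: le_trans (N1D _ _) _; rewrite addrC lerD2l.
apply: le_trans (N1_diff (lexx 0) r0 rT) _.
by rewrite lerBlDr (le_trans (F_mono r0 rT (lexx T))) // lerDl F_ge0.
Qed.


Definition Xb := N1 x0 + F T.
Definition Kc := 2 * pn P * (1 + Xb).

Lemma Kc_ge0 : 0 <= Kc.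
Proof.
rewrite /Kc mulr_ge0 ?mulr_ge0 ?pn_ge0 // addr_ge0 //.
by rewrite /Xb addr_ge0 ?N1_ge0 ?F_ge0.
Qed.

Lemma step s t : 0 <= s -> s <= t -> t <= T ->
  q t <= q s * (1 + (H t - H s)) + Kc * (F t - F s) ^+ 2.
Proof.
move=> s0 st tT.
set Psi := F t - F s.
pose c j := \sum_(i < n) (x t + x s) i 0 * P i j.
pose g r := \sum_(j < n) c j * f r j 0.
have intf j : mu.-integrable `]s, t] (EFin \o (fun r => f r j 0)).
  exact: int_sub s0 tT (hfi j).
have intcf j : mu.-integrable `]s, t] (EFin \o (fun r => c j * f r j 0)).
  exact: (integrableZl _ _ (intf j)).
have [ig Eg] := @Rint_sum R _ (index_enum 'I_n) `]s, t] (fun j r => c j * f r j 0) intcf.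
have e1 : q t - q s = \int[mu]_(r in `]s, t]) g r.
  have -> : q t - q s = bf P (x t + x s) (x t - x s).
    rewrite /q bfDl !bfDr !bfNr (bfC (x s) (x t) sP); ring.
  rewrite bfE /g Eg; apply: eq_bigr => j _.
  rewrite RintegralZl //; congr (_ * _).
  by rewrite mxE [X in x t j 0 + X]mxE x_diff.
have hpt' r : r \in `]s, t] -> g r <= h r * q s + psi r * (Kc * Psi).
  rewrite in_itv /= => /andP [sr rt].
  have r0 : 0 <= r by apply: le_trans s0 (ltW sr).
  have rT : r <= T by apply: le_trans rt tT.
  have -> : g r = bf P (f r) (x t + x s).
    by rewrite (bfC _ _ sP) bfE.
  have -> : psi r * (Kc * Psi) = psi r * (2 * pn P * (1 + Xb) * Psi).
    by rewrite /Kc mulrA.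
  apply: pt_bound => //.
  - by apply: hpt; rewrite r0 rT.
  - apply: le_trans (N1_diff r0 rt tT) _.
    by rewrite /Psi lerD2l lerN2 F_mono // ltW.
  - apply: le_trans (N1_diff s0 (ltW sr) rT) _.
    by rewrite /Psi lerD2r F_mono // (le_trans rt).
  - by rewrite /psi /N1 lerDl normr_ge0.
  - by rewrite /psi lerDr sumr_ge0.
  - exact: N1_x.
  - exact: N1_x (le_trans st tT).
have inth : mu.-integrable `]s, t] (EFin \o h) by exact: int_sub s0 tT hhi.
have intpsi : mu.-integrable `]s, t] (EFin \o psi) by exact: int_sub s0 tT psi_int.
have intR : mu.-integrable `]s, t] (EFin \o (fun r => h r * q s + psi r * (Kc * Psi))).
  have i1 : mu.-integrable `]s, t] (EFin \o (fun r => h r * q s)).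
    by apply: (eq_integrable _ _ _ _ (integrableZl _ (q s) inth)) => // r _ /=; rewrite -EFinM mulrC.
  have i2 : mu.-integrable `]s, t] (EFin \o (fun r => psi r * (Kc * Psi))).
    by apply: (eq_integrable _ _ _ _ (integrableZl _ (Kc * Psi) intpsi)) => // r _ /=; rewrite -EFinM mulrC.
  exact: (integrableD _ i1 i2).
have le1 := le_Rintegral _ ig intR (fun r hr => hpt' r hr).
move: le1; rewrite -e1 RintegralD //; first last.
  by apply: (eq_integrable _ _ _ _ (integrableZl _ (Kc * Psi) intpsi)) => // r _ /=; rewrite -EFinM mulrC.
  by apply: (eq_integrable _ _ _ _ (integrableZl _ (q s) inth)) => // r _ /=; rewrite -EFinM mulrC.
rewrite RintegralZr // RintegralZr // -H_split // -F_split // -/Psi.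
move=> le1; have {}le1 := le1 (measurable_itv _); rewrite expr2; nra.
Qed.

Definition G t := F t + t.

Lemma F0 : F 0 = 0. Proof. exact: int0. Qed.
Lemma H0 : H 0 = 0. Proof. exact: int0. Qed.

Lemma G_cont : {within `[0, T], continuous G}.
Proof.
have Fc := parameterized_integral_continuous T0 psi_int.
have idc : {within `[0, T], continuous (@id R)}.
  by apply: continuous_subspaceT => z; exact: cvg_id.
move=> z; exact: (continuousD (Fc z) (idc z)).
Qed.

Lemma G_gap a b : 0 <= a -> a <= b -> b <= T ->
  b - a <= G b - G a /\ F b - F a <= G b - G a.
Proof.
move=> a0 ab bT; have := F_mono a0 ab bT; rewrite /G; split; lra.
Qed.

Lemma H_low t : 0 <= t -> t <= T -> 0 <= H t + F T.
Proof.
move=> t0 tT.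
have ih : mu.-integrable `[0, t] (EFin \o h) by exact: int_subc tT hhi.
have ip : mu.-integrable `[0, t] (EFin \o psi) by exact: int_subc tT psi_int.
have h1 : `|H t| <= \int[mu]_(s in `[0, t]) `|h s| by exact: le_normr_Rintegral.
have h2 : \int[mu]_(s in `[0, t]) `|h s| <= F t.
  apply: le_Rintegral => //; first exact: integrable_norm.
  by move=> r _; rewrite /psi lerDr sumr_ge0.
have h3 := F_mono t0 tT (lexx T).
have h4 : - H t <= `|H t| by rewrite -normrN ler_norm.
lra.
Qed.

Lemma core_pos : 0 < T -> q T <= q 0 * expR (H T).
Proof.
move=> Tp.
have GT : T <= G T by rewrite /G lerDr F_ge0.
have G0 : G 0 = 0 by rewrite /G F0 addr0.
have GTp : 0 < G T by apply: lt_le_trans Tp GT.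
apply/ler_addgt0Pr => e e0.
set E := expR (F T).
set Z := expR (H T) * Kc * (G T) ^+ 2 * E.
have Z0 : 0 <= Z := mulr_ge0 (mulr_ge0 (mulr_ge0 (expR_ge0 _) Kc_ge0) (sqr_ge0 _)) (expR_ge0 _).
pose N := (Num.Def.trunc (Z / e)).+1.
have Np : (0 < N%:R :> R) by rewrite ltr0n.
have hN : Z / N%:R <= e.
  have := truncnS_gt (Z / e); rewrite -/N => lt1.
  rewrite ler_pdivrMr // mulrC -ler_pdivrMr //; exact: ltW.
set d := G T / N%:R.
have d0 : 0 <= d by rewrite /d divr_ge0 // ltW.
have hex : forall k : nat, exists c : R, ((k <= N)%N ->
    0 <= c /\ c <= T /\ G c = k%:R * d).
  move=> k; case: (leqP k N) => kN; last by exists 0.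
  have v1 : Num.min (G 0) (G T) <= k%:R * d <= Num.max (G 0) (G T).
    rewrite G0 min_l ?max_r ?(ltW GTp) //.
    rewrite mulr_ge0 //= /d mulrA mulrAC.
    have kN1 : k%:R / N%:R <= 1 :> R by rewrite ler_pdivrMr // mul1r ler_nat.
    have kN0 : 0 <= k%:R / N%:R :> R by rewrite divr_ge0.
    nra.
  have [c c1 c2] := IVT (ltW Tp) G_cont v1.
  exists c => _; move: c1; rewrite in_itv /= => /andP [c0 cT]; by [].
have [tau Htau] := choice hex.
have tau0 : tau 0%N = 0.
  have [a0 [_ Ga]] := Htau 0%N (leq0n _).
  have := G_gap (lexx 0) a0 (proj1 (proj2 (Htau 0%N (leq0n _)))).
  rewrite Ga G0 mul0r; lra.
have tauN : tau N = T.
  have [a0 [aT Ga]] := Htau N (leqnn _).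
  have := G_gap a0 aT (lexx T).
  rewrite Ga /d mulrCA divff ?mulr1; last by rewrite lt0r_neq0.
  lra.
have mono k : (k < N)%N -> tau k <= tau k.+1 /\ F (tau k.+1) - F (tau k) <= d.
  move=> kN.
  have [a0 [aT Ga]] := Htau k (ltnW kN).
  have [b0 [bT Gb]] := Htau k.+1 kN.
  have ab : tau k <= tau k.+1.
    case: (leP (tau k) (tau k.+1)) => // ba.
    have := G_gap b0 (ltW ba) aT.
    rewrite Ga Gb -natr1 => -[g1 _].
    have : 0 < d by rewrite /d divr_gt0.
    lra.
  split => //.
  have := G_gap a0 ab bT; rewrite Ga Gb -natr1 => -[_ g2].
  lra.
have qpsd t : 0 <= q t by exact: Ppsd.
have ind k : (k <= N)%N ->
    q (tau k) <= expR (H (tau k)) * (q 0 + k%:R * (Kc * d ^+ 2 * E)).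
  elim: k => [_|k IH kN].
    by rewrite tau0 H0 expR0 mul1r mul0r addr0.
  have [a0 [aT _]] := Htau k (ltnW kN).
  have [b0 [bT _]] := Htau k.+1 kN.
  have [ab dF] := mono k kN.
  have IH' := IH (ltnW kN).
  have st := step a0 ab bT.
  set a := tau k in IH' st ab dF a0 aT *; set b := tau k.+1 in st ab dF b0 bT *.
  have e1 : 1 + (H b - H a) <= expR (H b - H a) by exact: expR_ge1Dx.
  have e2 : expR (H b) = expR (H a) * expR (H b - H a) by rewrite -expRD addrC subrK.
  have e3 : 1 <= expR (H b) * E.
    rewrite /E -expRD -expR0; rewrite ler_expR; exact: H_low.
  have dF0 : 0 <= F b - F a by rewrite subr_ge0 F_mono.
  have dF2 : (F b - F a) ^+ 2 <= d ^+ 2 by rewrite ler_sqr ?nnegrE.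
  have K0 := Kc_ge0.
  have qa0 := qpsd a.
  have s1 : q a * (1 + (H b - H a)) <= q a * expR (H b - H a) by rewrite ler_wpM2l.
  have s2 : q a * expR (H b - H a) <=
      expR (H a) * (q 0 + k%:R * (Kc * d ^+ 2 * E)) * expR (H b - H a).
    by rewrite ler_wpM2r ?expR_ge0.
  have s3 : Kc * (F b - F a) ^+ 2 <= Kc * d ^+ 2 by rewrite ler_wpM2l.
  have s4 : Kc * d ^+ 2 <= expR (H b) * E * (Kc * d ^+ 2).
    by rewrite ler_peMl // mulr_ge0 // sqr_ge0.
  rewrite -natr1.
  have -> : expR (H b) * (q 0 + (k%:R + 1) * (Kc * d ^+ 2 * E)) =
     expR (H a) * (q 0 + k%:R * (Kc * d ^+ 2 * E)) * expR (H b - H a) +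
     expR (H b) * E * (Kc * d ^+ 2).
    rewrite e2; ring.
  lra.
have := ind N (leqnn N); rewrite tauN.
have -> : expR (H T) * (q 0 + N%:R * (Kc * d ^+ 2 * E)) = q 0 * expR (H T) + Z / N%:R.
  rewrite /Z /d; field; by rewrite lt0r_neq0.
lra.
Qed.

Lemma core : q T <= bf P x0 x0 * expR (H T).
Proof.
rewrite -x0E; case: (ltrP 0 T) => [Tp|T0']; first exact: core_pos.
have -> : T = 0 by apply/le_anti; rewrite T0 T0'.
by rewrite H0 expR0 mulr1.
Qed.

End Core.
Section Cx.
Variable R : realType.
Local Notation C := (R[i]).
Local Notation nc := (@Normc.normc R).
Local Open Scope complex_scope.

Lemma nc_ge0 (z : C) : 0 <= nc z.
Proof. by case: z => a b; rewrite /Normc.normc sqrtr_ge0. Qed.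

Lemma nc_sqr (z : C) : nc z ^+ 2 = complex.Re z ^+ 2 + complex.Im z ^+ 2.
Proof. by case: z => a b /=; rewrite sqr_sqrtr // addr_ge0 // sqr_ge0. Qed.

Lemma Re_le_nc (z : C) : complex.Re z <= nc z.
Proof.
case: z => a b /=; apply: le_trans (ler_norm a) _.
by rewrite -sqrtr_sqr ler_wsqrtr // lerDl sqr_ge0.
Qed.

Lemma ncM (z w : C) : nc (z * w) = nc z * nc w.
Proof. exact: Normc.normcM. Qed.

Lemma nc_conj (z : C) : nc (conjc z) = nc z.
Proof. by case: z => a b /=; rewrite sqrrN. Qed.

Lemma nc_real (r : R) : nc (r%:C) = `|r|.
Proof. by rewrite /Normc.normc /= expr0n /= addr0 sqrtr_sqr. Qed.

Lemma nc0 : nc 0 = 0.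
Proof. exact: Normc.normc0. Qed.

Lemma ncD (z w : C) : nc (z + w) <= nc z + nc w.
Proof. exact: le_normcD. Qed.

Lemma nc_sum (I : Type) (s : seq I) (F : I -> C) :
  nc (\sum_(i <- s) F i) <= \sum_(i <- s) nc (F i).
Proof.
elim: s => [|i s IH]; first by rewrite !big_nil nc0.
rewrite !big_cons; apply: le_trans (ncD _ _) _; exact: lerD.
Qed.

Lemma Re_conj_mul (y t : C) : complex.Re (conjc y * t * y) = complex.Re t * nc y ^+ 2.
Proof.
rewrite nc_sqr; case: y t => a b [c d] /=; ring.
Qed.

Lemma Re_sum (I : Type) (s : seq I) (F : I -> C) :
  complex.Re (\sum_(i <- s) F i) = \sum_(i <- s) complex.Re (F i).
Proof.
elim: s => [|i s IH]; first by rewrite !big_nil.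
rewrite !big_cons -IH; case: (F i) => a b; by case: (\sum_(j <- s) F j).
Qed.

Lemma Re_realM (r : R) (z : C) : complex.Re (r%:C * z) = r * complex.Re z.
Proof. case: z => a b /=; ring. Qed.

Lemma Re_conj (z : C) : complex.Re (conjc z) = complex.Re z.
Proof. by case: z. Qed.

Lemma conj_realM (r : R) (z : C) : conjc (r%:C * z) = r%:C * conjc z.
Proof.
case: z => a b; rewrite /= !mul0r; congr Complex; ring.
Qed.

Lemma sum_sqr_le (n : nat) (a : 'I_n -> R) :
  (\sum_(i < n) a i) ^+ 2 <= n%:R * \sum_(i < n) a i ^+ 2.
Proof.
set S := \sum_(i < n) a i ^+ 2.
have E : \sum_(i < n) \sum_(j < n) (a i ^+ 2 + a j ^+ 2) = 2 * (n%:R * S).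
  under eq_bigr => i _ do rewrite big_split /= sumr_const card_ord.
  rewrite big_split /= sumr_const card_ord /S.
  have e1 : \sum_(i < n) (a i ^+ 2 *+ n) = n%:R * (\sum_(i < n) a i ^+ 2).
    by rewrite mulr_sumr; apply: eq_bigr => i _; rewrite mulr_natl.
  have e2 : (\sum_(i < n) a i ^+ 2) *+ n = n%:R * (\sum_(i < n) a i ^+ 2) by rewrite mulr_natl.
  rewrite e1 e2; ring.
have L : (\sum_(i < n) a i) ^+ 2 <= \sum_(i < n) \sum_(j < n) (a i ^+ 2 + a j ^+ 2) / 2.
  rewrite expr2 mulr_suml; apply: ler_sum => i _; rewrite mulr_sumr; apply: ler_sum => j _.
  have := sqr_ge0 (a i - a j); rewrite sqrrB; lra.
have E2 : \sum_(i < n) \sum_(j < n) (a i ^+ 2 + a j ^+ 2) / 2 =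
    (\sum_(i < n) \sum_(j < n) (a i ^+ 2 + a j ^+ 2)) / 2.
  by rewrite mulr_suml; apply: eq_bigr => i _; rewrite mulr_suml.
rewrite E2 E in L; lra.
Qed.

Lemma dbl_sum (n : nat) (a : 'I_n -> R) :
  \sum_(i < n) \sum_(j < n) (a i + a j) = 2 * (n%:R * \sum_(i < n) a i).
Proof.
under eq_bigr => i _ do rewrite big_split /= sumr_const card_ord.
rewrite big_split /= sumr_const card_ord.
have e1 : \sum_(i < n) (a i *+ n) = n%:R * (\sum_(i < n) a i).
  by rewrite mulr_sumr; apply: eq_bigr => i _; rewrite mulr_natl.
have e2 : (\sum_(i < n) a i) *+ n = n%:R * (\sum_(i < n) a i) by rewrite mulr_natl.
rewrite e1 e2; ring.
Qed.
End Cx.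
Section Lyap.
Variable R : realType.
Local Notation C := (R[i]).
Local Notation nc := (@Normc.normc R).
Local Open Scope complex_scope.
Variable n : nat.
Variable A : 'M[R]_n.
Local Notation toC := (real_complex R).
Definition AC := map_mx toC A.
Variable U : 'M[C]_n.
Hypothesis Uu : U \in unitmx.
Hypothesis Ttrig : is_trig_mx (conjmx U AC).
Hypothesis hA : forall z : C, eigenvalue AC z -> complex.Re z < 0.

Definition T := conjmx U AC.

Lemma UT : U *m AC = T *m U.
Proof. by rewrite /T conjumx // mulmxKV. Qed.

Lemma ReT i : complex.Re (T i i) < 0.
Proof.
apply: hA; apply: (@eigenvalue_conjmx _ _ _ U).
- exact: stablemx_unit.
- by rewrite row_free_unit.
rewrite [_ \in _]eigenvalue_root_char -/T char_poly_trig // /root horner_prod.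
rewrite prodf_seq_eq0; apply/hasP; exists i; first by rewrite mem_index_enum.
by rewrite /= !hornerE subrr.
Qed.

Definition mu := (\sum_(i < n) (- complex.Re (T i i))^-1 + 1)^-1.

Lemma mu_gt0 : 0 < mu.
Proof.
rewrite /mu invr_gt0 ltr_pwDr // sumr_ge0 // => i _.
by rewrite invr_ge0 oppr_ge0 ltW // ReT.
Qed.

Lemma mu_le i : complex.Re (T i i) <= - mu.
Proof.
have hi : 0 < - complex.Re (T i i) by rewrite oppr_gt0 ReT.
rewrite lerNr /mu -[X in _ <= X]invrK lef_pV2 ?posrE ?invr_gt0 //; last first.
  rewrite ltr_pwDr // sumr_ge0 // => j _.
  by rewrite invr_ge0 oppr_ge0 ltW // ReT.
rewrite (bigD1 i) //= -addrA lerDl addr_ge0 // sumr_ge0 // => j _.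
by rewrite invr_ge0 oppr_ge0 ltW // ReT.
Qed.

Definition tau := \sum_(i < n) \sum_(j < n) nc (T i j).

Lemma tau_ge0 : 0 <= tau.
Proof. by rewrite sumr_ge0 // => i _; rewrite sumr_ge0 // => j _; exact: nc_ge0. Qed.

Lemma nc_le_tau i j : nc (T i j) <= tau.
Proof.
rewrite /tau (bigD1 i) //= (bigD1 j) //= -addrA lerDl addr_ge0 ?sumr_ge0 // => k _.
  exact: nc_ge0.
by rewrite sumr_ge0 // => l _; exact: nc_ge0.
Qed.

Definition eps := mu / (2 * (tau * n%:R + mu)).

Lemma eps_gt0 : 0 < eps.
Proof.
have := mu_gt0; have := tau_ge0 => t0 m0.
rewrite /eps divr_gt0 // mulr_gt0 // ltr_pwDr // mulr_ge0 //.
Qed.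

Lemma eps_le1 : eps <= 1.
Proof.
have := mu_gt0; have := tau_ge0 => t0 m0.
have tn : 0 <= tau * n%:R by rewrite mulr_ge0.
rewrite /eps ler_pdivrMr ?mul1r; last by rewrite mulr_gt0 // ltr_pwDr.
lra.
Qed.

Lemma eps_tau : eps * tau * n%:R <= mu / 2.
Proof.
have := mu_gt0; have := tau_ge0 => t0 m0.
have tn : 0 <= tau * n%:R by rewrite mulr_ge0.
have pos : 0 < 2 * (tau * n%:R + mu) by rewrite mulr_gt0 // ltr_pwDr.
rewrite /eps -mulrA mulrAC ler_pdivrMr // mulrAC.
rewrite ler_pdivlMr //; nra.
Qed.

Definition dd : 'rV[C]_n := \row_(i < n) (eps ^+ i)%:C.
Definition W := diag_mx dd *m U.
Definition Tp := \matrix_(i < n, j < n) ((eps ^+ i / eps ^+ j)%:C * T i j).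

Lemma eps_unit k : eps ^+ k != 0.
Proof. by rewrite expf_neq0 // lt0r_neq0 // eps_gt0. Qed.

Lemma diag_conj (M : 'M[C]_n) : diag_mx dd *m M =
  (\matrix_(i < n, j < n) ((eps ^+ i / eps ^+ j)%:C * M i j)) *m diag_mx dd.
Proof.
apply/matrixP => i j; rewrite mul_diag_mx mul_mx_diag !mxE.
rewrite mulrAC -rmorphM /= divfK //; exact: eps_unit.
Qed.

Lemma WA : W *m AC = Tp *m W.
Proof. by rewrite /W -mulmxA UT mulmxA diag_conj -mulmxA. Qed.

Lemma W_unit : W \in unitmx.
Proof.
rewrite /W unitmx_mul Uu andbT unitmxE det_diag unitfE.
rewrite prodf_seq_neq0; apply/allP => i _ /=; rewrite mxE.
by rewrite (inj_eq (@complexI R)) eps_unit.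
Qed.

Definition Pm : 'M[R]_n := \matrix_(j < n, k < n) complex.Re (\sum_(i < n) conjc (W i j) * W i k).

Definition Hf (y z : 'cV[C]_n) := \sum_(i < n) conjc (y i 0) * z i 0.
Local Notation mC x := (map_mx toC x).

Lemma Wx_entry (x : 'cV[R]_n) i : (W *m mC x) i 0 = \sum_(j < n) (x j 0)%:C * W i j.
Proof. rewrite mxE; apply: eq_bigr => j _; rewrite [mC x j 0]mxE; exact: mulrC. Qed.

Lemma conj_sum (I : Type) (s : seq I) (F : I -> C) : conjc (\sum_(i <- s) F i) = \sum_(i <- s) conjc (F i).
Proof. exact: rmorph_sum. Qed.

Lemma bfP (x z : 'cV[R]_n) : bf Pm x z = complex.Re (Hf (W *m mC x) (W *m mC z)).
Proof.
rewrite bfE /Hf.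
transitivity (\sum_(j < n) \sum_(k < n) \sum_(i < n)
    x j 0 * z k 0 * complex.Re (conjc (W i j) * W i k)).
  under eq_bigr => k _ do rewrite mulr_suml.
  rewrite exchange_big /=; apply: eq_bigr => j _; apply: eq_bigr => k _.
  rewrite mxE Re_sum mulr_sumr mulr_suml. apply: eq_bigr => i _; ring.
symmetry; rewrite Re_sum.
rewrite (eq_bigr (fun i => \sum_(j < n) \sum_(k < n)
    x j 0 * z k 0 * complex.Re (conjc (W i j) * W i k))); last first.
  move=> i _; rewrite !Wx_entry. rewrite conj_sum mulr_suml Re_sum; apply: eq_bigr => j _.
  rewrite mulr_sumr Re_sum; apply: eq_bigr => k _.
  have -> : conjc ((x j 0)%:C * W i j) * ((z k 0)%:C * W i k) =
      (x j 0 * z k 0)%:C * (conjc (W i j) * W i k).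
    by rewrite conj_realM rmorphM /=; ring.
  by rewrite Re_realM.
rewrite exchange_big /=; apply: eq_bigr => j _.
by rewrite exchange_big.
Qed.



Lemma Pm_sym : Pm^T = Pm.
Proof.
apply/matrixP => j k; rewrite !mxE !Re_sum; apply: eq_bigr => i _.
rewrite -Re_conj rmorphM /= conjcK mulrC //.
Qed.

Lemma Re_norm2 (y : C) : complex.Re (conjc y * y) = nc y ^+ 2.
Proof.
have -> : conjc y * y = conjc y * 1 * y by rewrite mulr1.
by rewrite Re_conj_mul /= mul1r.
Qed.

Lemma bf_nc x : bf Pm x x = \sum_(i < n) nc ((W *m mC x) i 0) ^+ 2.
Proof. rewrite bfP /Hf Re_sum; apply: eq_bigr => i _; exact: Re_norm2. Qed.

Lemma bf_A x : bf Pm x (A *m x) = complex.Re (Hf (W *m mC x) (Tp *m (W *m mC x))).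
Proof. rewrite bfP. rewrite (map_mxM toC). rewrite mulmxA. rewrite WA. by rewrite -(mulmxA Tp W). Qed.

Lemma Tp_diag i : Tp i i = T i i.
Proof. by rewrite mxE divff ?eps_unit // mul1r. Qed.

Lemma nc_Tp (i j : 'I_n) : (j < i)%N -> nc (Tp i j) <= eps * tau.
Proof.
move=> ji; rewrite mxE ncM nc_real -expfB // ger0_norm; last first.
  by rewrite exprn_ge0 // ltW // eps_gt0.
have -> : (i - j = (i - j).-1.+1)%N by rewrite prednK // subn_gt0.
have e0 := eps_gt0; have e1 := eps_le1.
have hk : eps ^+ (i - j).-1 <= 1 by apply: exprn_ile1 => //; exact: ltW.
have hk0 : 0 <= eps ^+ (i - j).-1 by apply: exprn_ge0; exact: ltW.
have := nc_le_tau i j; have := nc_ge0 (T i j) => n0 nt.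
have h1 : eps ^+ (i - j).-1 * nc (T i j) <= tau by nra.
by rewrite exprS -mulrA ler_wpM2l // ltW.
Qed.

Lemma term_le (i j : 'I_n) (a b : C) : a = b \/ i != j ->
  complex.Re (conjc a * Tp i j * b) <=
  (if i == j then - mu * nc a ^+ 2 else 0) + eps * tau * (nc a ^+ 2 + nc b ^+ 2) / 2.
Proof.
move=> hab.
have et : 0 <= eps * tau by rewrite mulr_ge0 ?tau_ge0 // ltW // eps_gt0.
have R0 : 0 <= eps * tau * (nc a ^+ 2 + nc b ^+ 2) / 2.
  by rewrite divr_ge0 // mulr_ge0 // addr_ge0 // sqr_ge0.
case: (ltngtP i j) => hij.
- have -> : Tp i j = 0.
    rewrite mxE; move/is_trig_mxP: Ttrig => ->; first by rewrite mulr0.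
    exact: hij.
  rewrite mulr0 mul0r /= ifN ?add0r //.
  by apply/eqP => e; move: hij; rewrite e ltnn.
- rewrite ifN ?add0r; last by apply/eqP => e; move: hij; rewrite e ltnn.
  apply: le_trans (Re_le_nc _) _.
  rewrite !ncM nc_conj.
  have := nc_Tp hij; have := nc_ge0 a; have := nc_ge0 b; have := nc_ge0 (Tp i j).
  move=> h1 h2 h3 h4.
  have h5 : nc a * nc b <= (nc a ^+ 2 + nc b ^+ 2) / 2.
    have := sqr_ge0 (nc a - nc b); rewrite sqrrB; lra.
  nra.
- have eij : i = j by apply: val_inj.
  subst j; rewrite eqxx.
  case: hab => [<-|]; last by rewrite eqxx.
  rewrite Tp_diag Re_conj_mul.
  have := mu_le i; have := sqr_ge0 (nc a); nra.
Qed.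

Lemma key_ineq (y : 'cV[C]_n) :
  complex.Re (Hf y (Tp *m y)) <= - (mu / 2) * \sum_(i < n) nc (y i 0) ^+ 2.
Proof.
set S := \sum_(i < n) nc (y i 0) ^+ 2.
have e : Hf y (Tp *m y) = \sum_(i < n) \sum_(j < n) conjc (y i 0) * Tp i j * y j 0.
  rewrite /Hf; apply: eq_bigr => i _; rewrite mxE mulr_sumr.
  by apply: eq_bigr => j _; rewrite mulrA.
rewrite e Re_sum.
set et := eps * tau.
apply: (@le_trans _ _ (\sum_(i < n) \sum_(j < n)
   ((if i == j then - mu * nc (y i 0) ^+ 2 else 0) +
    et * (nc (y i 0) ^+ 2 + nc (y j 0) ^+ 2) / 2))).
  apply: ler_sum => i _; rewrite Re_sum; apply: ler_sum => j _.
  apply: term_le; case: (eqVneq i j) => [->|]; [left|right] => //.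
rewrite (eq_bigr (fun i => - mu * nc (y i 0) ^+ 2 +
   \sum_(j < n) (et / 2) * (nc (y i 0) ^+ 2 + nc (y j 0) ^+ 2))); last first.
  move=> i _; rewrite big_split /=; congr (_ + _).
    rewrite (bigD1 i) //= eqxx big1 ?addr0 // => j.
    by rewrite eq_sym => /negbTE ->.
  by apply: eq_bigr => j _; rewrite mulrAC mulrC.
rewrite big_split /= -mulr_sumr.
under [X in _ + X <= _]eq_bigr => i _ do rewrite -mulr_sumr.
rewrite -mulr_sumr dbl_sum -/S.
have S0 : 0 <= S by rewrite sumr_ge0 // => i _; rewrite sqr_ge0.
have := eps_tau; rewrite -/et => h1.
have m0 := mu_gt0.
have : et / 2 * (2 * (n%:R * S)) = et * n%:R * S by field.
move=> ->; nra.
Qed.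

Definition Wi := invmx W.
Definition om := \sum_(j < n) \sum_(i < n) nc (Wi j i).

Lemma om_ge0 : 0 <= om.
Proof. by rewrite sumr_ge0 // => j _; rewrite sumr_ge0 // => i _; exact: nc_ge0. Qed.

Lemma nc_le_om j i : nc (Wi j i) <= om.
Proof.
rewrite /om (bigD1 j) //= (bigD1 i) //= -addrA lerDl addr_ge0 ?sumr_ge0 // => k _.
  exact: nc_ge0.
by rewrite sumr_ge0 // => l _; exact: nc_ge0.
Qed.

Lemma lower x : sqnorm2 x <=
  n%:R * (om ^+ 2 * (n%:R * \sum_(i < n) nc ((W *m mC x) i 0) ^+ 2)).
Proof.
set y := W *m mC x.
set S := \sum_(i < n) nc (y i 0) ^+ 2.
have hx : mC x = Wi *m y by rewrite /y /Wi mulKmx // W_unit.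
have hj j : x j 0 ^+ 2 <= om ^+ 2 * (n%:R * S).
  have e1 : x j 0 ^+ 2 = nc (mC x j 0) ^+ 2 by rewrite mxE nc_real real_normK // num_real.
  have e2 : nc (mC x j 0) <= om * \sum_(i < n) nc (y i 0).
    rewrite hx mxE. have h0 := nc_sum (index_enum 'I_n) (fun k => Wi j k * y k 0). apply: (le_trans h0).
    rewrite mulr_sumr; apply: ler_sum => i _; rewrite ncM.
    by rewrite ler_wpM2r ?nc_ge0 // nc_le_om.
  have e3 := sum_sqr_le (fun i => nc (y i 0)).
  rewrite e1; apply: (@le_trans _ _ ((om * \sum_(i < n) nc (y i 0)) ^+ 2)).
    by rewrite ler_sqr ?nnegrE ?nc_ge0 // mulr_ge0 ?om_ge0 // sumr_ge0 // => i _; exact: nc_ge0.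
  by rewrite exprMn ler_wpM2l // sqr_ge0.
rewrite /sqnorm2; apply: (@le_trans _ _ (\sum_(j < n) om ^+ 2 * (n%:R * S))).
  by apply: ler_sum => j _; exact: hj.
by rewrite sumr_const card_ord [X in _ <= X]mulr_natl.
Qed.

Lemma lyap_sec : exists (P : 'M[R]_n) (c p : R), [/\ P^T = P, 0 < c, 0 < p,
  forall x, p * sqnorm2 x <= bf P x x & forall x, bf P x (A *m x) <= - c * sqnorm2 x].
Proof.
set K := n%:R ^+ 2 * om ^+ 2.
have K0 : 0 <= K by rewrite mulr_ge0 // sqr_ge0.
set p := (K + 1)^-1.
have p0 : 0 < p by rewrite invr_gt0; lra.
have pK : p * K <= 1.
  by rewrite /p mulrC ler_pdivrMr ?mul1r; lra.
have m0 := mu_gt0.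
have low x : p * sqnorm2 x <= bf Pm x x.
  rewrite bf_nc; have := lower x; set S := \sum_(i < n) _.
  have S0 : 0 <= S by rewrite sumr_ge0 // => i _; rewrite sqr_ge0.
  have -> : n%:R * (om ^+ 2 * (n%:R * S)) = K * S by rewrite /K; ring.
  move=> h; have : p * sqnorm2 x <= p * (K * S) by rewrite ler_wpM2l // ltW.
  nra.
exists Pm, (mu / 2 * p), p; split => //.
- exact: Pm_sym.
- by rewrite mulr_gt0 // divr_gt0.
- move=> x; rewrite bf_A; apply: le_trans (key_ineq _) _.
  have := low x; rewrite bf_nc => h.
  have : mu / 2 * (p * sqnorm2 x) <= mu / 2 * \sum_(i < n) nc ((W *m mC x) i 0) ^+ 2.
    by rewrite ler_wpM2l // divr_ge0 // ltW.
  lra.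
Qed.
End Lyap.
Lemma lyap (R : realType) (n : nat) (A : 'M[R]_n) : spectrum_in_Cminus A ->
  exists (P : 'M[R]_n) (c p : R), [/\ P^T = P, 0 < c, 0 < p,
  forall x, p * sqnorm2 x <= bf P x x & forall x, bf P x (A *m x) <= - c * sqnorm2 x].
Proof.
case: n A => [|n] A hA.
  exists 0, 1, 1; split => //.
  - by rewrite trmx0.
  - by move=> x; rewrite /sqnorm2 big_ord0 mulr0 bfE big_ord0.
  - by move=> x; rewrite /sqnorm2 big_ord0 mulr0 bfE big_ord0.
have [U Uu Ut] := Schur (AC A) (ltn0Sn n).
apply: (@lyap_sec R n.+1 A U) => //.
  exact: unitarymx_unit.
move=> z /hA; rewrite -complexRe.
by rewrite -[0 : R[i]]/(0%:C)%C ltcR.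
Qed.
Section L2.
Variable R : realType.
Notation mu := (@lebesgue_measure R).

Lemma L2_int (g : R -> R) : L2fun g ->
  mu.-integrable `[0, +oo[ (EFin \o (fun s => g s ^+ 2)).
Proof.
case=> mg fin; apply/integrableP; split.
  apply/measurable_EFinP; exact: measurable_funX.
apply: le_lt_trans fin; rewrite le_eqVlt; apply/orP; left; apply/eqP.
by apply: eq_integral => s _ /=; rewrite ger0_norm // sqr_ge0.
Qed.

Lemma L2_int_t (g : R -> R) (t : R) : L2fun g -> 0 <= t ->
  mu.-integrable `[0, t] (EFin \o (fun s => g s ^+ 2)).
Proof.
move=> Lg t0; apply: integrableS (L2_int Lg) => //.
by apply: subset_itv; rewrite bnd_simp.
Qed.

Lemma L2_le_t (g : R -> R) (t : R) : L2fun g -> 0 <= t ->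
  \int[mu]_(s in `[0, t]) (g s ^+ 2) <= L2sqnorm g.
Proof.
move=> Lg t0; rewrite /L2sqnorm /Rintegral fine_le //.
- by apply: integrable_fin_num => //; exact: L2_int_t.
- by apply: integrable_fin_num => //; exact: L2_int.
apply: ge0_subset_integral => //.
- by apply/measurable_EFinP; case: Lg => mg _; exact: measurable_funX.
- by move=> s _; rewrite lee_fin sqr_ge0.
- by apply: subset_itv; rewrite bnd_simp.
Qed.

Lemma L2sqnorm_ge0 (g : R -> R) : 0 <= L2sqnorm g.
Proof. by apply: Rintegral_ge0 => s _; rewrite sqr_ge0. Qed.
End L2.
Section PtMain.
Variable R : realType.
Variables (n m : nat) (A : 'M[R]_n) (N : 'I_m -> 'M[R]_n) (P : 'M[R]_n) (c p : R).
Hypotheses (sP : P^T = P) (c0 : 0 < c) (p0 : 0 < p)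
  (low : forall x, p * sqnorm2 x <= bf P x x)
  (dec : forall x, bf P x (A *m x) <= - c * sqnorm2 x).

Definition pmax := pn P * n%:R + 1.
Definition Kt := \sum_(k < m) pn (P *m N k) * n%:R + 1.
Definition G0 := Kt ^+ 2 * m.+1%:R / c.

Lemma pmax_gt0 : 0 < pmax.
Proof. by rewrite /pmax ltr_pwDr // mulr_ge0 // pn_ge0. Qed.

Lemma Kt_ge0 : 0 <= Kt.
Proof. rewrite /Kt; apply: addr_ge0 => //; apply: sumr_ge0 => k _; apply: mulr_ge0 => //; exact: pn_ge0. Qed.

Lemma G0_ge0 : 0 <= G0.
Proof. rewrite /G0; apply: divr_ge0; [apply: mulr_ge0; [exact: sqr_ge0|exact: ler0n]|exact: ltW]. Qed.

Lemma sqnorm2_ge0 (y : 'cV[R]_n) : 0 <= sqnorm2 y.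
Proof. by rewrite /sqnorm2 sumr_ge0 // => i _; rewrite sqr_ge0. Qed.

Lemma N1_sq (y : 'cV[R]_n) : N1 y ^+ 2 <= n%:R * sqnorm2 y.
Proof.
have := sum_sqr_le (fun i => `|y i 0|); rewrite /N1 /sqnorm2.
have e : \sum_(i < n) `|y i 0| ^+ 2 = \sum_(i < n) y i 0 ^+ 2.
  by apply: eq_bigr => i _; rewrite real_normK // num_real.
by rewrite e.
Qed.

Lemma bf_upper (Q : 'M[R]_n) (y : 'cV[R]_n) : `|bf Q y y| <= pn Q * n%:R * sqnorm2 y.
Proof.
apply: le_trans (bf_bound _ _ _) _.
rewrite -mulrA -expr2 -mulrA ler_wpM2l ?pn_ge0 //; exact: N1_sq.
Qed.

Lemma bf_sum (a : 'cV[R]_n) (F : 'I_m -> 'cV[R]_n) :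
  bf P a (\sum_(k < m) F k) = \sum_(k < m) bf P a (F k).
Proof.
elim/big_rec2: _ => [|k y1 y2 _ <-]; first by rewrite /bf mulmx0 mxE.
by rewrite bfDr.
Qed.

Lemma pt_main (w : 'I_m -> R) (y : 'cV[R]_n) :
  2 * bf P y (A *m y + \sum_(k < m) w k *: (N k *m y)) <=
  (- (c / pmax) + G0 / p * \sum_(k < m) w k ^+ 2) * bf P y y.
Proof.
set S := sqnorm2 y; set V := bf P y y; set Q := \sum_(k < m) w k ^+ 2.
have S0 : 0 <= S := sqnorm2_ge0 y.
have pm0 := pmax_gt0.
have K0 := Kt_ge0.
have G00 := G0_ge0.
have Q0 : 0 <= Q by rewrite sumr_ge0 // => k _; rewrite sqr_ge0.
have lowS : p * S <= V := low y.
have upV : V <= pmax * S.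
  apply: le_trans (ler_norm _) _; apply: le_trans (bf_upper _ _) _.
  by rewrite ler_wpM2r // /pmax lerDl.
have hA := dec y.
have hk k : `|w k * bf P y (N k *m y)| <= `|w k| * (Kt * S).
  rewrite normrM ler_wpM2l //.
  have -> : bf P y (N k *m y) = bf (P *m N k) y y by rewrite /bf !mulmxA.
  apply: le_trans (bf_upper _ _) _; rewrite ler_wpM2r //.
  rewrite /Kt (bigD1 k) //= -addrA lerDl addr_ge0 // sumr_ge0 // => l _.
  by rewrite mulr_ge0 // pn_ge0.
have amgm k : 2 * (`|w k| * Kt) <= c / m.+1%:R + G0 * w k ^+ 2.
  have m1 : 0 < m.+1%:R :> R by rewrite ltr0n.
  have e : G0 * w k ^+ 2 = (Kt * `|w k|) ^+ 2 / (c / m.+1%:R).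
    rewrite /G0 exprMn real_normK ?num_real //; field.
    by rewrite lt0r_neq0 // lt0r_neq0.
  rewrite e.
  set a := c / m.+1%:R; have a0 : 0 < a by rewrite divr_gt0.
  set b := Kt * `|w k|.
  have : 0 <= (a - b) ^+ 2 / a by rewrite divr_ge0 // ?sqr_ge0 // ltW.
  have -> : (a - b) ^+ 2 / a = a - 2 * b + b ^+ 2 / a.
    by field; rewrite lt0r_neq0.
  rewrite /b; lra.
have sumk : 2 * \sum_(k < m) `|w k| * Kt <= c + G0 * Q.
  rewrite mulr_sumr /Q mulr_sumr.
  apply: le_trans (_ : _ <= \sum_(k < m) (c / m.+1%:R + G0 * w k ^+ 2)) _.
    by apply: ler_sum => k _; exact: amgm.
  rewrite big_split /= sumr_const card_ord lerD2r.
  have e : c / m.+1%:R *+ m = c * m%:R / m.+1%:R by rewrite -mulr_natr mulrAC.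
  rewrite e ler_pdivrMr ?ltr0n //.
  apply: ler_wpM2l; first exact: ltW.
  by rewrite ler_nat leqnSn.
have Sbound : bf P y (\sum_(k < m) w k *: (N k *m y)) <= (\sum_(k < m) `|w k| * Kt) * S.
  rewrite bf_sum mulr_suml; apply: ler_sum => k _.
  rewrite bfZr; apply: le_trans (ler_norm _) _; apply: le_trans (hk k) _.
  by rewrite mulrA.
rewrite bfDr.
have h1 : c * V / pmax <= c * S.
  rewrite ler_pdivrMr // -mulrA; apply: ler_wpM2l; [exact: ltW | by rewrite mulrC].
have SV : S <= V / p by rewrite ler_pdivlMr // mulrC.
have h2 : G0 * Q * S <= G0 / p * Q * V.
  have -> : G0 / p * Q * V = G0 * Q * (V / p) by field; rewrite lt0r_neq0.
  by apply: ler_wpM2l => //; rewrite mulr_ge0.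
have e3 : (- (c / pmax) + G0 / p * Q) * V = - (c * V / pmax) + G0 / p * Q * V.
  by field; rewrite !lt0r_neq0.
have h3 : 2 * ((\sum_(k < m) `|w k| * Kt) * S) <= (c + G0 * Q) * S.
  by rewrite mulrA ler_wpM2r.
rewrite e3.
have h3' : 2 * ((\sum_(k < m) `|w k| * Kt) * S) <= c * S + G0 * Q * S by rewrite -mulrDl.
move: h3' Sbound hA h1 h2; rewrite mulNr.
set Sg := \sum_(k < m) _; set B := bf P y _.
set a1 := c * S; set a2 := c * V / pmax; set a3 := G0 * Q * S; set a4 := G0 / p * Q * V.
set a5 := Sg * S.
lra.
Qed.
End PtMain.
Section MainAux.
Variable R : realType.
Notation mu := (@lebesgue_measure R).

Lemma cst_int (k t : R) : mu.-integrable `[0, t] (EFin \o (fun _ => k)).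
Proof.
apply: measurable_bounded_integrable => //=.
- rewrite lebesgue_measure_itv //=; case: ifPn => // _.
  by rewrite -EFinB ltry.
- exact: bounded_cst.
Qed.

Lemma int_cst_t (k t : R) : 0 <= t -> \int[mu]_(s in `[0, t]) k = k * t.
Proof.
move=> t0; rewrite Rintegral_cst //.
have E := @lebesgue_measure_itv R `[0, t].
have -> : fine (mu `[0, t]) = t.
  move: E; rewrite /= lte_fin.
  case: ltrP => [t0' ->|tle ->]; first by rewrite /= subr0.
  by apply/esym/le_anti; rewrite tle t0.
by [].
Qed.

Lemma L2fun_u0 (n m : nat) (N : 'I_m -> 'M[R]_n) (u : 'I_m -> R -> R) k :
  L2input u -> L2fun (u0 N u k).
Proof.
move=> Lu; rewrite /u0; case: eqP => _; last exact: Lu.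
split; first exact: measurable_cst.
under eq_integral do rewrite expr0n /=.
by rewrite integral0 ltry.
Qed.

Lemma rhs_u0 (n m : nat) (A : 'M[R]_n) (N : 'I_m -> 'M[R]_n) (u : 'I_m -> R -> R)
  (x : R -> 'cV[R]_n) s :
  bilin_rhs A N u x s = A *m x s + \sum_(k < m) (u0 N u k s) *: (N k *m x s).
Proof.
rewrite /bilin_rhs; congr (_ + _); apply: eq_bigr => k _; rewrite /u0.
by case: eqP => [->|//]; rewrite mul0mx !scaler0.
Qed.
End MainAux.
Theorem theorem4p4 (R : realType) (n m : nat) (A : 'M[R]_n)
  (N : 'I_m -> 'M[R]_n) (hA : spectrum_in_Cminus A) :
  exists gamma k1 k2 : R, [/\ 0 < gamma, 0 < k1, 0 < k2 &
    forall (u : 'I_m -> R -> R), L2input u ->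
    forall (x0 : 'cV[R]_n) (x : R -> 'cV[R]_n), is_bilin_solution A N u x0 x ->
    forall t : R, 0 <= t ->
      sqnorm2 (x t) <=
        expR (gamma ^+ 2 * L2sqnorm_vec (u0 N u)) * sqnorm2 x0
        * (k1 * expR (- (k2 * t)))].
Proof.
have [P [c [p [sP c0 p0 low dec]]]] := lyap hA.
have pm0 := pmax_gt0 P.
have G00 := G0_ge0 N P c0.
set pm := pmax P in pm0 *.
set G := G0 N P c in G00 *.
set gam := G / p + 1.
have gam1 : 1 <= gam by rewrite /gam lerDr divr_ge0 // ltW.
have gam2 : G / p <= gam ^+ 2.
  have : G / p <= gam by rewrite /gam lerDl.
  have : gam <= gam ^+ 2 by rewrite expr2 ler_peMl // (le_trans ler01).
  lra.
exists gam, (pm / p), (c / pm); split.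
- by apply: lt_le_trans gam1.
- by rewrite divr_gt0.
- by rewrite divr_gt0.
move=> u Lu x0 x sol t t0.
pose f := fun r => bilin_rhs A N u x r.
pose h := fun r => - (c / pm) + G / p * \sum_(k < m) (u0 N u k r) ^+ 2.
have psd y : 0 <= bf P y y.
  apply: le_trans (low y); apply: mulr_ge0; [exact: ltW | exact: sqnorm2_ge0].
have hfi i : lebesgue_measure.-integrable `[0, t] (EFin \o (fun r => f r i 0)).
  exact: (proj1 (sol t t0 i)).
have Lu0 k := L2fun_u0 N k Lu.
have [isum Esum] := @Rint_sum R _ (index_enum 'I_m) `[0, t]
   (fun k r => (u0 N u k r) ^+ 2) (fun k => L2_int_t (Lu0 k) t0).
have i2 : lebesgue_measure.-integrable `[0, t]
    (EFin \o (fun r => G / p * \sum_(k < m) (u0 N u k r) ^+ 2)).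
  exact: (integrableZl _ _ isum).
have hhi : lebesgue_measure.-integrable `[0, t] (EFin \o h).
  exact: (integrableD _ (cst_int _ _) i2).
have hx r : 0 <= r <= t -> forall i, x r i 0 = x0 i 0 +
    \int[lebesgue_measure]_(s in `[0, r]) f s i 0.
  by case/andP => r0 _ i; exact: (proj2 (sol r r0 i)).
have hpt r : 0 <= r <= t -> 2 * bf P (x r) (f r) <= h r * bf P (x r) (x r).
  move=> _; rewrite /f rhs_u0; exact: pt_main.
have cr := core sP psd t0 hfi hhi hx hpt.
have EH : H h t = - (c / pm) * t + G / p * \sum_(k < m)
    \int[lebesgue_measure]_(s in `[0, t]) (u0 N u k s) ^+ 2.
  rewrite /H /h RintegralD //; last exact: cst_int.
  by rewrite int_cst_t // RintegralZl // Esum.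
have Lsum : \sum_(k < m) \int[lebesgue_measure]_(s in `[0, t]) (u0 N u k s) ^+ 2 <=
    L2sqnorm_vec (u0 N u).
  by apply: ler_sum => k _; exact: L2_le_t.
have S0 : 0 <= \sum_(k < m) \int[lebesgue_measure]_(s in `[0, t]) (u0 N u k s) ^+ 2.
  by apply: sumr_ge0 => k _; apply: Rintegral_ge0 => s _; rewrite sqr_ge0.
have Hle : H h t <= gam ^+ 2 * L2sqnorm_vec (u0 N u) + - (c / pm * t).
  rewrite EH mulNr addrC lerD2r.
  apply: le_trans (_ : _ <= G / p * L2sqnorm_vec (u0 N u)) _.
    by rewrite ler_wpM2l // divr_ge0 // ltW.
  rewrite ler_wpM2r //; apply: le_trans S0 Lsum.
have eH : expR (H h t) <= expR (gam ^+ 2 * L2sqnorm_vec (u0 N u)) * expR (- (c / pm * t)).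
  by rewrite -expRD ler_expR.
have up0 : bf P x0 x0 <= pm * sqnorm2 x0.
  apply: le_trans (ler_norm _) _; apply: le_trans (bf_upper _ _) _.
  by rewrite ler_wpM2r ?sqnorm2_ge0 // /pm /pmax lerDl.
have lowt := low (x t).
rewrite /q in cr.
set E1 := expR (gam ^+ 2 * _) in eH *.
set E2 := expR (- _) in eH *.
set Et := expR (H h t) in cr eH.
have Et0 : 0 <= Et by exact: expR_ge0.
have E10 : 0 <= E1 by exact: expR_ge0.
have E20 : 0 <= E2 by exact: expR_ge0.
have X0 := sqnorm2_ge0 x0.
have s1 : p * sqnorm2 (x t) <= pm * sqnorm2 x0 * (E1 * E2).
  apply: le_trans lowt _; apply: le_trans cr _.
  apply: ler_pM => //; exact: psd.
rewrite -(ler_pM2l p0).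
have -> : p * (E1 * sqnorm2 x0 * (pm / p * E2)) = pm * sqnorm2 x0 * (E1 * E2).
  by field; rewrite lt0r_neq0.
exact: s1.
Qed.
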